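(* Let $G$ be a non-trivial graph with $m$ edges. Then $$ H(\mathcal{L}(G)) \leq \frac{m}{2} , $$ with equality if and only if each connected component of $G$ is regular or biregular.
   Context: All graphs are finite and simple. A graph is non-trivial if each of its connected components has at least two edges. $d_u$ is the degree of $u$. The harmonic index is $H(G)=\sum_{uv\in E(G)}\frac{2}{d_u+d_v}$. The line graph $\mathcal{L}(G)$ has vertex set $E(G)$, two vertices being adjacent iff the corresponding edges share an end vertex in $G$. A graph is biregular if it is bipartite and all vertices in the same part of the bipartition have the same degree. *)

(* Defs.v *)
(* A simple graph is a symmetric irreflexive relation on a finType. *)
From HB Require Import structures.
From mathcomp Require Import all_boot all_order all_algebra.
Set Implicit Arguments. Unset Strict Implicit. Unset Printing Implicit Defensive.
Import Order.TTheory GRing.Theory Num.Theory.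

Section Graphs.
Variable V : finType.
Variable r : rel V.

Definition deg (x : V) : nat := #|[set y | r x y]|.

Definition edges : {set {set V}} :=
  [set [set x; y] | x in V, y in V & r x y].

Definition gcomp (x : V) : {set V} := [set y | connect r x y].

Definition comp_edges (x : V) : {set {set V}} :=
  [set S in edges | S \subset gcomp x].

Definition nontrivial : Prop := forall x : V, 2 <= #|comp_edges x|.

Definition regular_on (C : {set V}) : Prop :=
  exists k : nat, forall y, y \in C -> deg y = k.

Definition biregular_on (C : {set V}) : Prop :=
  exists (A B : {set V}) (k1 k2 : nat),
    [/\ A :|: B = C, A :&: B = set0,
        (forall y z, y \in C -> z \in C -> r y z ->
             (y \in A) && (z \in B) || (y \in B) && (z \in A)),
        (forall y, y \in A -> deg y = k1) &
        (forall y, y \in B -> deg y = k2)].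

End Graphs.

Definition harmonic (R : fieldType) (V : finType) (r : rel V) : R :=
  (\sum_(S in edges r) 2 / (\sum_(x in S) deg r x)%N%:R)%R.

Definition ledge (V : finType) (r : rel V) := {S : {set V} | S \in edges r}.

Definition linegraph (V : finType) (r : rel V) : rel (ledge r) :=
  fun A B => (val A != val B) && (val A :&: val B != set0).
Arguments linegraph {V} r.
Arguments harmonic R {V} r.

(* Main.v *)
Require Import Defs.
From HB Require Import structures.
From mathcomp Require Import all_boot all_order all_algebra.
From mathcomp Require Import ring lra zify.
Import Order.TTheory GRing.Theory Num.Theory.
Set Implicit Arguments. Unset Strict Implicit. Unset Printing Implicit Defensive.

Section Gen.
Variables (W : finType) (s : rel W).
Hypotheses (ssym : symmetric s) (sirr : irreflexive s).

Lemma edgesP S : reflect (exists a b, s a b /\ S = [set a; b]) (S \in edges s).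
Proof.
apply: (iffP imset2P).
  by move=> [a b _]; rewrite inE => /andP[_ sab] ->; exists a, b.
by move=> [a [b [sab ->]]]; exists a b; rewrite ?inE ?sab.
Qed.

Lemma big_set2 (R : nmodType) a b (F : W -> R) : a != b ->
  (\sum_(x in [set a; b]) F x = F a + F b)%R.
Proof.
by move=> ab; rewrite big_setU1 ?big_set1 // !inE.
Qed.

Definition star x := [set S in edges s | x \in S].

Lemma star_im x : star x = (fun y => [set x; y]) @: [set y | s x y].
Proof.
apply/setP => S; rewrite inE; apply/andP/imsetP.
  move=> [/edgesP [a [b [sab ->]]]]; rewrite !inE => /orP[]/eqP->.
    by exists b; rewrite ?inE.
  by exists a; rewrite ?inE 1?ssym // setUC.
move=> [y]; rewrite inE => sxy ->; split; last by rewrite set21.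
by apply/edgesP; exists x, y.
Qed.

Lemma card_star x : #|star x| = deg s x.
Proof.
rewrite star_im card_in_imset //.
move=> y1 y2; rewrite !inE => s1 s2 e.
have : y1 \in [set x; y2] by rewrite -e set22.
rewrite !inE => /orP[/eqP h|/eqP //].
by move: s1; rewrite h sirr.
Qed.

Lemma double_count (R : nmodType) (F : W -> R) :
  (\sum_(S in edges s) \sum_(x in S) F x = \sum_x F x *+ deg s x)%R.
Proof.
rewrite (exchange_big_dep xpredT) //=; apply: eq_bigr => x _.
rewrite -card_star -sumr_const; apply: eq_bigl => S; by rewrite inE.
Qed.

Lemma edge_deg S : S \in edges s -> exists a b, [/\ s a b, a != b & S = [set a; b]].
Proof.
move=> /edgesP [a [b [sab ->]]]; exists a, b; split => //.
by apply: contraTneq sab => ->; rewrite sirr.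
Qed.

Variable R : realFieldType.
Hypothesis spos : forall a, (0 < deg s a)%N.

Local Open Scope ring_scope.

Definition gS (S : {set W}) : R := \sum_(x in S) (2 * (deg s x)%:R)^-1.
Definition dS (S : {set W}) : R := gS S - 2 / (\sum_(x in S) deg s x)%N%:R.

Lemma key (x y : R) : 0 < x -> 0 < y ->
  (2 * x)^-1 + (2 * y)^-1 - 2 / (x + y) = (x - y) ^+ 2 / (2 * x * y * (x + y)).
Proof.
move=> hx hy; field.
by rewrite !lt0r_neq0 ?addr_gt0.
Qed.

Lemma dS_form S : S \in edges s -> exists a b, [/\ s a b, a != b, S = [set a; b] &
  dS S = ((deg s a)%:R - (deg s b)%:R) ^+ 2 /
    (2 * (deg s a)%:R * (deg s b)%:R * ((deg s a)%:R + (deg s b)%:R))].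
Proof.
move=> /edge_deg [a [b [sab ab ->]]]; exists a, b; split => //.
rewrite /dS /gS !big_set2 // natrD key // ltr0n; exact: spos.
Qed.

Lemma dS_ge0 S : S \in edges s -> 0 <= dS S.
Proof.
move=> /dS_form [a [b [_ _ _ ->]]].
have := spos a; have := spos b; rewrite -!(ltr0n R) => pb pa.
by apply: divr_ge0; [exact: sqr_ge0 | rewrite !mulr_ge0 ?ltW ?addr_gt0].
Qed.

Lemma sum_gS : \sum_(S in edges s) gS S = #|W|%:R / 2.
Proof.
rewrite /gS double_count.
transitivity (\sum_(x : W) (2 : R)^-1).
  apply: eq_bigr => x _; rewrite -[_ *+ deg s x]mulr_natr invfM -mulrA mulVf ?mulr1 //.
  by rewrite pnatr_eq0 -lt0n spos.
by rewrite sumr_const -[_ *+ _]mulr_natr mulrC.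
Qed.

Lemma harm_eq : harmonic R s = #|W|%:R / 2 - \sum_(S in edges s) dS S.
Proof.
rewrite /dS sumrB sum_gS /harmonic; ring.
Qed.

Lemma gen_main : harmonic R s <= #|W|%:R / 2 /\
  (harmonic R s = #|W|%:R / 2 <-> forall a b, s a b -> deg s a = deg s b).
Proof.
rewrite harm_eq; split.
  by rewrite gerDl oppr_le0 sumr_ge0 // => S; exact: dS_ge0.
split.
  move=> /eqP; rewrite -subr_eq0 addrAC subrr add0r oppr_eq0 => /eqP h a b sab.
  have Se : [set a; b] \in edges s by apply/edgesP; exists a, b.
  have := psumr_eq0P dS_ge0 h Se.
  have [a' [b' [_ ab' e ->]]] := dS_form Se.
  have := spos a'; have := spos b'; rewrite -!(ltr0n R) => pb pa.
  have hden : 2 * (deg s a')%:R * (deg s b')%:R * ((deg s a')%:R + (deg s b')%:R) != 0 :> R.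
    by rewrite !mulf_neq0 ?lt0r_neq0 ?addr_gt0.
  move/eqP; rewrite mulf_eq0 invr_eq0 (negbTE hden) orbF sqrf_eq0 subr_eq0 eqr_nat => /eqP hd.
  have ab : a != b by apply: contraTneq sab => ->; rewrite sirr.
  have : a \in [set a'; b'] by rewrite -e set21.
  have : b \in [set a'; b'] by rewrite -e set22.
  rewrite !inE => /orP[]/eqP-> /orP[]/eqP->; rewrite ?eqxx // in ab *.
move=> h; rewrite big1 ?subr0 // => S /dS_form [a [b [sab _ _ ->]]].
by rewrite (h a b sab) subrr expr0n mul0r.
Qed.

End Gen.

Section Main.
Variables (V : finType) (r : rel V).
Hypotheses (r_sym : symmetric r) (r_irr : irreflexive r).

Lemma deg_pos x y : r x y -> (0 < deg r x)%N.
Proof. by move=> rxy; rewrite card_gt0; apply/set0Pn; exists y; rewrite inE. Qed.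

Lemma edge_at S v : S \in edges r -> v \in S -> exists u, r v u /\ S = [set v; u].
Proof.
move=> /edgesP [a [b [rab ->]]]; rewrite !inE => /orP[]/eqP->.
  by exists b.
by exists a; rewrite r_sym setUC.
Qed.

Lemma img_lg (e : ledge r) u v : r u v -> val e = [set u; v] ->
  val @: [set B | linegraph r e B] = (star r u :|: star r v) :\ [set u; v].
Proof.
move=> ruv ev; apply/setP => S; rewrite in_setD1 in_setU !inE.
apply/imsetP/idP.
  move=> [B]; rewrite inE /linegraph => /andP[neq /set0Pn [w hw]] ->.
  rewrite ev in neq hw; move: hw; rewrite inE => /andP[].
  rewrite eq_sym neq (valP B) /= !inE => /orP[]/eqP-> -> //.
  by rewrite orbT.
move=> /andP[neq /orP[]/andP[Se inS]].
  exists (exist _ S Se : ledge r) => //; rewrite inE /linegraph /= ev eq_sym neq /=.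
  by apply/set0Pn; exists u; rewrite !inE eqxx.
exists (exist _ S Se : ledge r) => //; rewrite inE /linegraph /= ev eq_sym neq /=.
by apply/set0Pn; exists v; rewrite !inE eqxx orbT.
Qed.

Lemma star_inter u v : r u v -> star r u :&: star r v = [set [set u; v]].
Proof.
move=> ruv; have uv : u != v by apply: contraTneq ruv => ->; rewrite r_irr.
apply/setP => S; rewrite !inE; apply/idP/idP.
  move=> /andP[/andP[Se uS] /andP[_ vS]].
  have [a [b [rab eS]]] := edgesP r S Se.
  have ab : a != b by apply: contraTneq rab => ->; rewrite r_irr.
  move: uS vS; rewrite eS !inE => /orP[]/eqP hu /orP[]/eqP hv.
  - by move: uv; rewrite hu hv eqxx.
  - by rewrite hu hv.
  - by rewrite hu hv setUC.
  - by move: uv; rewrite hu hv eqxx.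
move=> /eqP->; rewrite set21 set22 andbT andbb.
by apply/edgesP; exists u, v.
Qed.

Lemma degL (e : ledge r) u v : r u v -> val e = [set u; v] ->
  deg (linegraph r) e = (deg r u + deg r v - 2)%N.
Proof.
move=> ruv ev.
rewrite [LHS]/deg -(card_imset _ val_inj) (img_lg ruv ev).
have Hin : [set u; v] \in star r u :|: star r v.
  by rewrite inE inE set21 andbT; apply/orP; left; apply/edgesP; exists u, v.
have := cardsD1 [set u; v] (star r u :|: star r v).
rewrite Hin cardsU star_inter // cards1 !card_star //.
have := deg_pos ruv; move=> h1 h2.
move: h1 h2; move: (deg r u) (deg r v) (#|_ :\ _|) => a b c /=; lia.
Qed.


Lemma lg_sym : symmetric (linegraph r).
Proof. by move=> A B; rewrite /linegraph eq_sym setIC. Qed.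

Lemma lg_irr : irreflexive (linegraph r).
Proof. by move=> A; rewrite /linegraph eqxx. Qed.

Lemma lg_pos (nt : nontrivial r) (e : ledge r) : (0 < deg (linegraph r) e)%N.
Proof.
have [u [v [ruv ev]]] : exists u v, r u v /\ val e = [set u; v].
  by apply/(edgesP r (val e)); exact: valP.
rewrite (degL ruv ev).
have hu := deg_pos ruv; have hv : (0 < deg r v)%N by apply: (@deg_pos v u); rewrite r_sym.
case: (ltnP 1 (deg r u)) => [|hu1]; first by lia.
case: (ltnP 1 (deg r v)) => [|hv1]; first by lia.
exfalso.
have one x y : r x y -> (deg r x <= 1)%N -> forall z, r x z -> z = y.
  move=> rxy dx z rxz; apply/eqP; apply/negPn/negP => zy.
  have : (1 < deg r x)%N.
    rewrite /deg (cardsD1 y) inE rxy add1n ltnS card_gt0.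
    by apply/set0Pn; exists z; rewrite !inE zy rxz.
  by rewrite ltnNge dx.
have cl : closed r [set u; v].
  move=> x y rxy; rewrite !inE.
  have rvu : r v u by rewrite r_sym.
  case/boolP: ((x == u) || (x == v)) => [/orP[]/eqP hx|hx].
  - by rewrite hx in rxy; rewrite (one _ _ ruv hu1 _ rxy) eqxx orbT.
  - by rewrite hx in rxy; rewrite (one _ _ rvu hv1 _ rxy) eqxx.
  - apply/esym/negbTE; apply: contra hx => /orP[]/eqP hy; rewrite hy in rxy.
    + by rewrite (one _ _ ruv hu1 _ (etrans (r_sym _ _) rxy)) eqxx orbT.
    + by rewrite (one _ _ rvu hv1 _ (etrans (r_sym _ _) rxy)) eqxx.
have sub : comp_edges r u \subset [set [set u; v]].
  apply/subsetP => S; rewrite inE => /andP[Se Sc]; rewrite inE.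
  have [a [b [rab eS]]] := edgesP r S Se.
  have inC z : z \in S -> z \in [set u; v].
    move=> zS; have := subsetP Sc z zS; rewrite inE => cz.
    by rewrite -(closed_connect cl cz) set21.
  have ha := inC a; have hb := inC b.
  rewrite eS set21 set22 !inE in ha hb *.
  have ab : a != b by apply: contraTneq rab => ->; rewrite r_irr.
  move: ha hb ab => /(_ isT)/orP[]/eqP-> /(_ isT)/orP[]/eqP->; rewrite ?eqxx //.
  by rewrite setUC.
have h1 := nt u; have h2 := subset_leq_card sub; rewrite cards1 in h2.
by move: h1 h2; move: #|comp_edges r u| => n; lia.
Qed.


Lemma rsym' x y : r x y -> r y x.
Proof. by rewrite r_sym. Qed.

Lemma dist2 (h : forall A B : ledge r, linegraph r A B ->
                   deg (linegraph r) A = deg (linegraph r) B) u v w :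
  r u v -> r v w -> deg r u = deg r w.
Proof.
move=> ruv rvw; case: (eqVneq u w) => [->//|uw].
have rvu := rsym' ruv.
have Ae : [set v; u] \in edges r by apply/edgesP; exists v, u.
have Be : [set v; w] \in edges r by apply/edgesP; exists v, w.
have lg : linegraph r (exist _ [set v; u] Ae : ledge r) (exist _ [set v; w] Be : ledge r).
  rewrite /linegraph /=; apply/andP; split.
    apply/negP => /eqP e; have : u \in [set v; w] by rewrite -e set22.
    rewrite !inE (negbTE uw) orbF => /eqP hu.
    by move: ruv; rewrite hu r_irr.
  by apply/set0Pn; exists v; rewrite !inE eqxx.
have := h _ _ lg; rewrite (@degL (exist _ [set v; u] Ae) v u rvu erefl) (@degL (exist _ [set v; w] Be) v w rvw erefl).
have := deg_pos ruv; have := deg_pos rvu; have := deg_pos (rsym' rvw).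
by move: (deg r u) (deg r v) (deg r w) => a b c; lia.
Qed.

Definition Pinv y k1 k2 := deg r y = k1 /\ forall z, r y z -> deg r z = k2.

Lemma forward (D : forall u v w, r u v -> r v w -> deg r u = deg r w) x :
  regular_on r (gcomp r x) \/ biregular_on r (gcomp r x).
Proof.
have step y z k1 k2 : Pinv y k1 k2 -> r y z -> Pinv z k2 k1.
  move=> [hy hz] ryz; split; first exact: hz.
  by move=> t rzt; rewrite (D _ _ _ (rsym' rzt) (rsym' ryz)).
set k1 := deg r x.
set k2 := if [pick z | r x z] is Some z then deg r z else deg r x.
have Px : Pinv x k1 k2.
  split => // z rxz; rewrite /k2; case: pickP => [z0 rxz0|/(_ z)]; last by rewrite rxz.
  exact: D _ _ _ (rsym' rxz) rxz0.
have allP y : connect r x y -> Pinv y k1 k2 \/ Pinv y k2 k1.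
  move=> /connectP [p pp ->]; move: pp.
  elim: p x k1 k2 Px => [|z p IH] x' a b Pab /=; first by left.
  move=> /andP[rz pp]; have := IH z b a (step _ _ _ _ Pab rz) pp.
  by case; [right|left].
case: (eqVneq k1 k2) => [e|ne].
  left; exists k1 => y; rewrite inE => /allP[[]|[]] //; by rewrite e.
right; exists [set y in gcomp r x | deg r y == k1], [set y in gcomp r x | deg r y == k2], k1, k2.
split.
- apply/setP => y; rewrite !inE; case: (boolP (connect r x y)) => //= yC.
  by case: (allP y yC) => -[-> _]; rewrite eqxx ?orbT.
- apply/setP => y; rewrite !inE.
  case: (boolP (connect r x y)) => //= _.
  by apply/negP => /andP[/eqP-> /eqP e]; move: ne; rewrite e eqxx.
- move=> y z; rewrite !inE => yC zC ryz; rewrite yC zC /=.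
  by case: (allP y yC) => -[-> hz]; rewrite (hz _ ryz) !eqxx ?orbT.
- by move=> y; rewrite inE => /andP[_ /eqP].
- by move=> y; rewrite inE => /andP[_ /eqP].
Qed.

Lemma backward (H : forall x, regular_on r (gcomp r x) \/ biregular_on r (gcomp r x))
  (A B : ledge r) : linegraph r A B -> deg (linegraph r) A = deg (linegraph r) B.
Proof.
move=> /andP[_ /set0Pn [v]]; rewrite inE => /andP[vA vB].
have [u [rvu eA]] := edge_at (valP A) vA.
have [w [rvw eB]] := edge_at (valP B) vB.
rewrite (degL rvu eA) (degL rvw eB); congr (_ + _ - _)%N.
have uC : u \in gcomp r v by rewrite inE connect1.
have wC : w \in gcomp r v by rewrite inE connect1.
have vC : v \in gcomp r v by rewrite inE connect0.
case: (H v) => [[k hk]|[A' [B' [k1 [k2 [hU hI hE hA hB]]]]]].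
  by rewrite (hk _ uC) (hk _ wC).
have disj y : y \in A' -> y \in B' -> False.
  move=> ya yb; have : y \in A' :&: B' by rewrite inE ya yb.
  by rewrite hI inE.
case: (boolP (v \in A')) => vA'.
  have hu := hE _ _ vC uC rvu; have hw := hE _ _ vC wC rvw.
  rewrite vA' /= in hu hw.
  case/orP: hu => [hu|/andP[vB' _]]; last by case: (disj v).
  case/orP: hw => [hw|/andP[vB' _]]; last by case: (disj v).
  by rewrite (hB _ hu) (hB _ hw).
have hu := hE _ _ vC uC rvu; have hw := hE _ _ vC wC rvw.
rewrite (negbTE vA') /= in hu hw.
case/andP: hu => _ hu; case/andP: hw => _ hw.
by rewrite (hA _ hu) (hA _ hw).
Qed.

End Main.

Local Open Scope ring_scope.

Theorem corollary3p2 (R : realFieldType) (V : finType) (r : rel V)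
    (r_sym : symmetric r) (r_irr : irreflexive r) (r_nt : nontrivial r) :
  harmonic R (linegraph r) <= (#|edges r|)%:R / 2 /\
  (harmonic R (linegraph r) = (#|edges r|)%:R / 2 <->
     (forall x : V, regular_on r (gcomp r x) \/ biregular_on r (gcomp r x))).
Proof.
have [le eq] := @gen_main _ (linegraph r) (@lg_sym V r) (@lg_irr V r) R (lg_pos r_sym r_irr r_nt).
rewrite card_sig in le eq.
have cardE : #|[pred x : {set V} | x \in edges r]| = #|edges r| by apply: eq_card.
rewrite cardE in le eq; split => //.
rewrite eq; split.
  move=> h x; apply: forward => //; exact: dist2.
by move=> h A B; apply: backward.
Qed.
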